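(* Every Abel sequentially compact subset of $\mathbb{R}$ is $\delta$-ward compact.
   Context: A sequence $(p_n)_{n\ge0}$ is Abel convergent to $\ell$ if $\sum_{k=0}^{\infty}p_k x^k$ converges for every $0\le x<1$ and $\lim_{x\to 1^-}(1-x)\sum_{k=0}^{\infty}p_k x^k=\ell$. A subset $F\subseteq\mathbb{R}$ is Abel sequentially compact if every sequence of points of $F$ has a subsequence Abel convergent to a limit belonging to $F$. A sequence $(p_n)$ is $\delta$-quasi-Cauchy if $\lim_{n\to\infty}\big((p_{n+2}-p_{n+1})-(p_{n+1}-p_n)\big)=0$, i.e. the sequence of differences $(p_{n+1}-p_n)$ is quasi-Cauchy. A subset $E\subseteq\mathbb{R}$ is $\delta$-ward compact if every sequence of points of $E$ has a $\delta$-quasi-Cauchy subsequence. *)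

(* Defs.v *)
From Stdlib Require Import Reals.
From Coquelicot Require Import Coquelicot.
Open Scope R_scope.

Definition subseq_index (phi : nat -> nat) : Prop :=
  forall n, (phi n < phi (S n))%nat.

Definition abel_convergent (p : nat -> R) (l : R) : Prop :=
  (forall x, 0 <= x < 1 -> ex_series (fun k => p k * x ^ k)) /\
  filterlim (fun x => (1 - x) * Series (fun k => p k * x ^ k))
            (at_left 1) (locally l).

Definition abel_seq_compact (F : R -> Prop) : Prop :=
  forall p : nat -> R, (forall n, F (p n)) ->
    exists phi, subseq_index phi /\
      exists l, F l /\ abel_convergent (fun n => p (phi n)) l.

Definition delta_quasi_cauchy (p : nat -> R) : Prop :=
  is_lim_seq (fun n => (p (S (S n)) - p (S n)) - (p (S n) - p n)) 0.

Definition delta_ward_compact (E : R -> Prop) : Prop :=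
  forall p : nat -> R, (forall n, E (p n)) ->
    exists phi, subseq_index phi /\ delta_quasi_cauchy (fun n => p (phi n)).

(* Main.v *)
Require Import Defs.
From Stdlib Require Import Reals Lra Lia Classical ClassicalEpsilon.
From Coquelicot Require Import Coquelicot.
Open Scope R_scope.

Lemma phi_ge (phi : nat -> nat) : subseq_index phi -> forall k, (k <= phi k)%nat.
Proof. intros H k; induction k; [lia|]. specialize (H k); lia. Qed.

Lemma abel_bounded (F : R -> Prop) : abel_seq_compact F ->
  exists M, forall x, F x -> Rabs x <= M.
Proof.
  intros HA. apply NNPP; intro HN.
  assert (Hq : forall n : nat, exists x, F x /\ 2 ^ n < Rabs x).
  { intro n. apply NNPP; intro H2. apply HN. exists (2 ^ n). intros x Fx.
    apply Rnot_lt_le. intro Hlt. apply H2. eauto. }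
  destruct (choice _ Hq) as [q Hq'].
  destruct (HA q (fun n => proj1 (Hq' n))) as [phi [Hphi [l [_ [Hs _]]]]].
  assert (H0 : ex_series (fun k => q (phi k) * (1/2) ^ k)) by (apply Hs; lra).
  apply ex_series_lim_0 in H0. apply is_lim_seq_spec in H0.
  destruct (H0 (mkposreal 1 Rlt_0_1)) as [N HN1]. specialize (HN1 N (Nat.le_refl _)).
  simpl in HN1. rewrite Rminus_0_r, Rabs_mult in HN1.
  pose proof (proj2 (Hq' (phi N))) as Hb.
  assert (Hp : 2 ^ N <= 2 ^ phi N) by (apply Rle_pow; [lra| apply phi_ge; auto]).
  assert (Hpos : 0 < 2 ^ N) by (apply pow_lt; lra).
  rewrite (Rabs_right ((1/2)^N)) in HN1 by (apply Rle_ge, pow_le; lra).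
  replace ((1/2)^N) with (/ 2 ^ N) in HN1 by (unfold Rdiv; rewrite Rmult_1_l, pow_inv; reflexivity).
  assert (Rabs (q (phi N)) * / 2 ^ N >= 1).
  { apply Rle_ge. apply (Rmult_le_reg_r (2 ^ N)); auto.
    rewrite Rmult_assoc, Rinv_l; lra. }
  lra.
Qed.

Lemma bw_subseq (p : nat -> R) (M : R) : (forall n, Rabs (p n) <= M) ->
  exists phi (l : R), subseq_index phi /\ is_lim_seq (fun n => p (phi n)) l.
Proof.
  intros Hb.
  destruct (Bolzano_Weierstrass p (fun c => -M <= c <= M) (compact_P3 (-M) M))
    as [l Hl].
  { intro n; specialize (Hb n); apply Rabs_le_between; auto. }
  assert (Hg : forall N k : nat, exists m, (N <= m)%nat /\ Rabs (p m - l) < / INR (S k)).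
  { intros N k.
    assert (Hk : 0 < / INR (S k)) by (apply Rinv_0_lt_compat, lt_0_INR; lia).
    assert (Hn : neighbourhood (disc l (mkposreal _ Hk)) l).
    { exists (mkposreal _ Hk). intros y Hy; exact Hy. }
    destruct (Hl _ N Hn) as [m [Hm Hv]].
    exists m; split; [exact Hm|]. unfold disc in Hv. exact Hv. }
  destruct (choice (fun (Nk : nat * nat) m => (fst Nk <= m)%nat /\
     Rabs (p m - l) < / INR (S (snd Nk)))) as [g Hg'].
  { intros [N k]; apply Hg. }
  set (phi := fix f n := match n with O => g (O, O) | S n' => g (S (f n'), S n') end).
  exists phi, l. split.
  - intro n. simpl. destruct (Hg' (S (phi n), S n)) as [H _]. simpl in H. lia.
  - apply is_lim_seq_spec. intro eps.
    destruct (archimed_cor1 eps (cond_pos eps)) as [N [HN HN0]].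
    exists N. intros n Hn.
    assert (Hd : Rabs (p (phi n) - l) < / INR (S n)).
    { destruct n; simpl; [apply (Hg' (O,O)) | apply (Hg' (S (phi n), S n))]. }
    eapply Rlt_le_trans; [exact Hd|].
    apply Rlt_le, Rle_lt_trans with (/ INR N); [|auto].
    apply Rinv_le_contravar; [apply lt_0_INR; lia|]. apply le_INR; lia.
Qed.

Theorem corollary20 (F : R -> Prop) :
  abel_seq_compact F -> delta_ward_compact F.
Proof.
  intros HA p Hp.
  destruct (abel_bounded F HA) as [M HM].
  destruct (bw_subseq p M (fun n => HM _ (Hp n))) as [phi [l [Hphi Hl]]].
  exists phi; split; auto. unfold delta_quasi_cauchy.
  set (u := fun n => p (phi n)) in *.
  assert (H1 := proj1 (is_lim_seq_incr_1 u l) Hl).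
  assert (H2 := proj1 (is_lim_seq_incr_1 _ l) H1). simpl in H2.
  replace (Finite 0) with (Rbar_minus (Rbar_minus l l) (Rbar_minus l l)).
  - apply is_lim_seq_minus'; apply is_lim_seq_minus'; auto.
  - simpl. f_equal. ring.
Qed.
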